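(* Let $\Phi(\mathbf{x})=\sum_{v\in V}\mathbf{x}_v^2$. For every $\mathbf{x}\in\Delta_n$ we have $\Phi(g(\mathbf{x}))\ge\Phi(\mathbf{x})$, with equality only if $\mathbf{x}$ is a fixed point of $g$. Consequently, for every starting point $\mathbf{x}^{(0)}\in\Delta_n$, every limit point of the trajectory $\mathbf{x}^{(t)}=g^t(\mathbf{x}^{(0)})$ is a fixed point of $g$.
   Context: $G=(V,E)$ is a finite undirected graph with $n$ vertices, $N_u$ the neighbourhood of $u$, $\Delta_n=\{\mathbf{x}\in\mathbb{R}^n_{\ge 0}:\sum_v\mathbf{x}_v=1\}$. For every edge $uv\in E$, $F_{uv}=F_{vu}:[-1,1]\to[-1,1]$ is continuously differentiable, $F_{uv}(0)=0$, increasing and odd. The map $g:\Delta_n\to\Delta_n$ is $g(\mathbf{x})_u=\mathbf{x}_u+\sum_{v\in N_u}\mathbf{x}_u\mathbf{x}_vF_{uv}(\mathbf{x}_u-\mathbf{x}_v)$; a fixed point is $\mathbf{p}$ with $g(\mathbf{p})=\mathbf{p}$. *)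

(* Defs.v *)
From HB Require Import structures.
From mathcomp Require Import all_boot all_order all_algebra.
From mathcomp Require Import all_classical all_reals all_analysis.
Set Implicit Arguments. Unset Strict Implicit. Unset Printing Implicit Defensive.
Import Order.TTheory GRing.Theory Num.Theory.
Import numFieldNormedType.Exports.
Local Open Scope classical_set_scope.
Local Open Scope ring_scope.

(* Points of R^n are row vectors 'rV[R]_n (product topology = norm topology). *)

Definition simple_graph (n : nat) (e : rel 'I_n) : Prop :=
  symmetric e /\ irreflexive e.

Definition simplex (R : realType) (n : nat) : set 'rV[R]_n :=
  [set x | (forall v, 0 <= x 0 v) /\ \sum_(v < n) x 0 v = 1].

(* Hypotheses on a single edge function F_{uv} : [-1,1] -> [-1,1]
   (F is given on all of R; only its values on [-1,1] matter). *)
Definition admissible_F (R : realType) (f : R -> R) : Prop :=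
  (forall t, t \in `[-1, 1] -> f t \in `[-1, 1]) /\
  (forall t, t \in `[-1, 1] -> derivable f t 1) /\
  {within `[-1, 1], continuous (derive1 f)} /\
  f 0 = 0 /\
  {in `[-1, 1] &, forall s t, s < t -> f s < f t} /\
  (forall t, t \in `[-1, 1] -> f (- t) = - f t).

Definition gmap (R : realType) (n : nat) (e : rel 'I_n)
    (F : 'I_n -> 'I_n -> R -> R) (x : 'rV[R]_n) : 'rV[R]_n :=
  \row_u (x 0 u + \sum_(v < n | e u v) x 0 u * x 0 v * F u v (x 0 u - x 0 v)).

Definition Phi (R : realType) (n : nat) (x : 'rV[R]_n) : R :=
  \sum_(v < n) x 0 v ^+ 2.

(* Main.v *)
Require Import Defs.
From HB Require Import structures.
From mathcomp Require Import all_boot all_order all_algebra.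
From mathcomp Require Import all_classical all_reals all_analysis.
From mathcomp Require Import ring lra.
Import Order.TTheory GRing.Theory Num.Theory.
Import numFieldNormedType.Exports.
Local Open Scope classical_set_scope.
Local Open Scope ring_scope.
Set Implicit Arguments. Unset Strict Implicit.

Definition hh (R : realType) (n : nat) (e : rel 'I_n)
    (F : 'I_n -> 'I_n -> R -> R) (x : 'rV[R]_n) u : R :=
  \sum_(v < n | e u v) x 0 u * x 0 v * F u v (x 0 u - x 0 v).

Lemma cvg_hh (R : realType) (n : nat) (e : rel 'I_n)
    (F : 'I_n -> 'I_n -> R -> R) (p : 'rV[R]_n) u :
  (forall v, e u v -> {for p 0 u - p 0 v, continuous (F u v)}) ->
  (fun y => hh e F y u) @ p --> hh e F p u.
Proof.
move=> Fc; apply: cvg_big; [exact: add_continuous| exact: nbhs_filter |].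
move=> v /Fc Fcv.
have cu : (fun y : 'rV[R]_n => y 0 u) @ p --> p 0 u by exact: (@coord_continuous R 1 n 0 _ p).
have cv : (fun y : 'rV[R]_n => y 0 v) @ p --> p 0 v by exact: (@coord_continuous R 1 n 0 _ p).
have cF : (fun y : 'rV[R]_n => F u v (y 0 u - y 0 v)) @ p --> F u v (p 0 u - p 0 v).
  exact: (continuous_cvg _ Fcv (cvgB cu cv)).
exact: (cvgM (cvgM cu cv) cF).
Qed.

Lemma Fcont (R : realType) (f : R -> R) t : admissible_F f -> t \in `[-1, 1] ->
  {for t, continuous f}.
Proof.
move=> [_ [df _]] ti.
apply/differentiable_continuous; rewrite -derivable1_diffP; exact: df.
Qed.

Lemma sum_antisym_half (R : realType) n (c : 'I_n -> 'I_n -> R) :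
  (\sum_u \sum_v c u v) * 2 = \sum_u \sum_v (c u v + c v u).
Proof.
have E : \sum_u \sum_v c v u = \sum_u \sum_v c u v by rewrite exchange_big.
under [RHS]eq_bigr do rewrite big_split.
by rewrite big_split /= E mulr2n mulrDr mulr1.
Qed.

Lemma simplex_bounds (R : realType) n (x : 'rV[R]_n) v :
  simplex x -> 0 <= x 0 v <= 1.
Proof.
move=> [x0 s1]; rewrite x0 /=; rewrite -s1 (bigD1 v) //= lerDl.
by apply: sumr_ge0 => i _.
Qed.

Lemma adm_facts (R : realType) (f : R -> R) t : admissible_F f -> t \in `[-1, 1] ->
  [/\ -1 <= f t <= 1, 0 <= t * f t & f (- t) = - f t].
Proof.
move=> [fr [_ [_ [f0 [fm fo]]]]] ti; split.
- by have := fr t ti; rewrite in_itv.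
- have zi : (0:R) \in `[-1, 1] by rewrite in_itv /= lerN10 ler01.
  case: (ltgtP t 0) => [tn|tp|->]; last by rewrite mul0r.
  + have := fm t 0 ti zi tn; rewrite f0 => h; nra.
  + have := fm 0 t zi ti tp; rewrite f0 => h; nra.
- exact: fo.
Qed.

Section Main.
Context (R : realType) (n : nat) (e : rel 'I_n) (F : 'I_n -> 'I_n -> R -> R).
Context (He : simple_graph e) (HF : forall u v, e u v -> F u v = F v u)
  (Ha : forall u v, e u v -> admissible_F (F u v)).

Lemma diff_itv (x : 'rV[R]_n) u v : simplex x -> x 0 u - x 0 v \in `[-1, 1].
Proof.
move=> sx; have /andP[a b] := simplex_bounds u sx; have /andP[c d] := simplex_bounds v sx.
rewrite in_itv /=; apply/andP; split; lra.
Qed.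

Lemma esym u v : e u v = e v u.
Proof. by have [s _] := He; apply: s. Qed.

Lemma sum_hh x : simplex x -> \sum_u hh e F x u = 0.
Proof.
move=> sx.
pose c := fun u v => if e u v then x 0 u * x 0 v * F u v (x 0 u - x 0 v) else 0.
have -> : \sum_u hh e F x u = \sum_u \sum_v c u v.
  by apply: eq_bigr => u _; rewrite /hh big_mkcond.
have H := sum_antisym_half c.
have H0 : \sum_u \sum_v (c u v + c v u) = 0.
  apply: big1 => u _; apply: big1 => v _; rewrite /c -(esym u v).
  case euv: (e u v); last by rewrite addr0.
  have [_ _ fo] := adm_facts (Ha euv) (diff_itv u v sx).
  rewrite -(HF euv) -[x 0 v - x 0 u]opprB fo; ring.
lra.
Qed.

Lemma cross_ge0 x : simplex x -> 0 <= \sum_u x 0 u * hh e F x u.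
Proof.
move=> sx.
pose c := fun u v => if e u v then x 0 u ^+ 2 * x 0 v * F u v (x 0 u - x 0 v) else 0.
have -> : \sum_u x 0 u * hh e F x u = \sum_u \sum_v c u v.
  apply: eq_bigr => u _; rewrite /hh mulr_sumr big_mkcond; apply: eq_bigr => v _.
  by rewrite /c; case: (e u v) => //; ring.
have H := sum_antisym_half c.
have H0 : 0 <= \sum_u \sum_v (c u v + c v u).
  apply: sumr_ge0 => u _; apply: sumr_ge0 => v _; rewrite /c -(esym u v).
  case euv: (e u v); last by rewrite addr0.
  have [_ tf fo] := adm_facts (Ha euv) (diff_itv u v sx).
  rewrite -(HF euv) -[x 0 v - x 0 u]opprB fo.
  have /andP[a _] := simplex_bounds u sx; have /andP[b _] := simplex_bounds v sx.
  have -> : x 0 u ^+ 2 * x 0 v * F u v (x 0 u - x 0 v) +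
    x 0 v ^+ 2 * x 0 u * - F u v (x 0 u - x 0 v) =
    (x 0 u * x 0 v) * ((x 0 u - x 0 v) * F u v (x 0 u - x 0 v)) by ring.
  by apply: mulr_ge0 => //; apply: mulr_ge0.
lra.
Qed.

Lemma gE x u : gmap e F x 0 u = x 0 u + hh e F x u.
Proof. by rewrite mxE. Qed.

Lemma Phi_g x : Phi (gmap e F x) = Phi x + 2 * (\sum_u x 0 u * hh e F x u)
   + \sum_u hh e F x u * hh e F x u.
Proof.
rewrite /Phi; under eq_bigr do rewrite gE.
transitivity (\sum_u (x 0 u ^+ 2 + 2 * (x 0 u * hh e F x u) + hh e F x u * hh e F x u)).
  by apply: eq_bigr => u _; ring.
by rewrite !big_split /= -mulr_sumr.
Qed.

Lemma simplex_g x : simplex x -> simplex (gmap e F x).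
Proof.
move=> sx; have [x0 s1] := sx; split.
- move=> u; rewrite gE.
  have /andP[a b] := simplex_bounds u sx.
  have k1 : - (x 0 u * \sum_(v < n | e u v) x 0 v) <= hh e F x u.
    rewrite mulr_sumr -sumrN; apply: ler_sum => v euv.
    have [/andP[f1 f2] _ _] := adm_facts (Ha euv) (diff_itv u v sx).
    have /andP[c _] := simplex_bounds v sx.
    have : 0 <= x 0 u * x 0 v by apply: mulr_ge0.
    nra.
  have k2 : \sum_(v < n | e u v) x 0 v <= 1 - x 0 u.
    have -> : 1 - x 0 u = \sum_(v < n | v != u) x 0 v.
      by rewrite -s1 (bigD1 u) //=; ring.
    rewrite big_mkcond [X in _ <= X]big_mkcond; apply: ler_sum => v _.
    case euv: (e u v).
    + have -> : v != u by apply/eqP => vu; have [_ ir] := He; rewrite vu ir in euv.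
      by [].
    + by case: (v != u) => //; apply: x0.
  nra.
- under eq_bigr do rewrite gE.
  by rewrite big_split /= sum_hh // addr0.
Qed.

Lemma Phi_le1 (x : 'rV[R]_n) : simplex x -> Phi x <= 1.
Proof.
move=> sx; have [_ s1] := sx; rewrite /Phi -s1; apply: ler_sum => v _.
have /andP[a b] := simplex_bounds v sx; nra.
Qed.

Lemma fixed_of x : \sum_u hh e F x u * hh e F x u = 0 -> gmap e F x = x.
Proof.
move=> h0; apply/rowP => u; rewrite gE.
have P := @psumr_eq0P _ _ xpredT (fun u => hh e F x u * hh e F x u).
have := P (fun i _ => ltac:(rewrite -expr2; exact: sqr_ge0)) h0 u isT.
by move/eqP; rewrite mulf_eq0 orbb => /eqP ->; rewrite addr0.
Qed.

Lemma part1 x : simplex x ->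
  Phi (gmap e F x) >= Phi x /\ (Phi (gmap e F x) = Phi x -> gmap e F x = x).
Proof.
move=> sx; have c := cross_ge0 sx.
have q : 0 <= \sum_u hh e F x u * hh e F x u.
  by apply: sumr_ge0 => u _; rewrite -expr2; exact: sqr_ge0.
rewrite Phi_g; split; first lra.
by move=> h; apply: fixed_of; lra.
Qed.
Lemma cluster_seq (x : nat -> 'rV[R]_n) p : cluster (x @ \oo) p ->
  forall N (B : set 'rV[R]_n), nbhs p B -> exists t, (N <= t)%N /\ B (x t).
Proof.
move=> cl N B pB.
have [y [[t Nt <-] By]] : [set x t | t in [set t | (N <= t)%N]] `&` B !=set0.
  apply: cl => //; exists N => // t /= Nt; exists t => //.
by exists t.
Qed.

Lemma part2 x0 : simplex x0 -> forall p : 'rV[R]_n,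
  cluster ((fun t : nat => iter t (gmap e F) x0) @ \oo) p -> gmap e F p = p.
Proof.
move=> s0 p cl.
set x := fun t => iter t (gmap e F) x0.
have sx : forall t, simplex (x t) by elim => //= t IH; exact: simplex_g.
have CS := cluster_seq cl.
have sp : simplex p.
  split.
  - move=> v; rewrite leNgt; apply/negP => pv.
    have nb := cvgr_lt _ (@coord_continuous R 1 n 0 v p) _ pv.
    have [t [_ h]] := CS 0%N _ (nb ltac:(exact: nbhs_filter)).
    have [x0' _] := sx t; by have := x0' v; rewrite leNgt h.
  - have cs : (fun y : 'rV[R]_n => \sum_v y 0 v) @ p --> \sum_v p 0 v.
      apply: cvg_big; [exact: add_continuous| exact: nbhs_filter|].
      by move=> v _; exact: (@coord_continuous R 1 n 0 v p).
    case: (ltgtP (\sum_v p 0 v) 1) => // [lt|gt].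
    + have nb := cvgr_lt _ cs _ lt.
      have [t [_ h]] := CS 0%N _ (nb ltac:(exact: nbhs_filter)).
      have [_ s1] := sx t; by move: h => /=; rewrite s1 ltxx.
    + have nb := cvgr_gt _ cs _ gt.
      have [t [_ h]] := CS 0%N _ (nb ltac:(exact: nbhs_filter)).
      have [_ s1] := sx t; by move: h => /=; rewrite s1 ltxx.
pose E y := \sum_u hh e F y u * hh e F y u.
have E0 : 0 <= E p.
  by apply: sumr_ge0 => u _; rewrite -expr2; exact: sqr_ge0.
case: (eqVneq (E p) 0) => [Ep0|Epn]; first exact: fixed_of.
exfalso; have Ep : 0 < E p by rewrite lt_def Epn E0.
have cE : E @ p --> E p.
  apply: cvg_big; [exact: add_continuous| exact: nbhs_filter|].
  move=> u _.
  have hc : forall v, e u v -> {for p 0 u - p 0 v, continuous (F u v)}.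
    by move=> v euv; exact: (Fcont (Ha euv) (diff_itv u v sp)).
  exact: (cvgM (cvg_hh hc) (cvg_hh hc)).
set d := E p / 2.
have dp : 0 < d by rewrite /d; lra.
have dlt : d < E p by rewrite /d; lra.
have nb := cvgr_gt _ cE _ dlt.
have jump : forall N, exists t, (N <= t)%N /\ Phi (x t) + d <= Phi (x t.+1).
  move=> N; have [t [Nt h]] := CS N _ (nb ltac:(exact: nbhs_filter)); exists t; split => //.
  have -> : x t.+1 = gmap e F (x t) by [].
  have := Phi_g (x t); have := cross_ge0 (sx t); move: h; rewrite /E /=; lra.
have mono : forall m k, Phi (x m) <= Phi (x (m + k)%N).
  move=> m; elim => [|k IH]; first by rewrite addn0.
  rewrite addnS; apply: le_trans IH _; have [] := part1 (sx (m+k)%N); done.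
have grow : forall k : nat, exists T, k%:R * d <= Phi (x T).
  elim => [|k [T hT]].
    exists 0%N; rewrite mul0r; apply: sumr_ge0 => v _; exact: sqr_ge0.
  have [t [Tt ht]] := jump T; exists t.+1.
  have := mono T (t - T)%N; rewrite subnKC // -natr1 mulrDl mul1r; lra.
have [T hT] := grow (Num.truncn d^-1).+1.
have h := truncnS_gt d^-1.
have dd : d^-1 * d = 1 by rewrite mulVf // gt_eqF.
have := Phi_le1 (sx T); nra.
Qed.

End Main.

Theorem mainTheorem3 (R : realType) (n : nat) (e : rel 'I_n)
  (F : 'I_n -> 'I_n -> R -> R) :
  simple_graph e ->
  (forall u v, e u v -> F u v = F v u) ->
  (forall u v, e u v -> admissible_F (F u v)) ->
  (forall x, @simplex R n x ->
     Phi (gmap e F x) >= Phi x /\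
     (Phi (gmap e F x) = Phi x -> gmap e F x = x)) /\
  (forall x0, @simplex R n x0 ->
     forall p : 'rV[R]_n,
       cluster ((fun t : nat => iter t (gmap e F) x0) @ \oo) p ->
       gmap e F p = p).
Proof.
move=> He HF Ha; split; [exact: part1 | exact: part2].
Qed.
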